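(* Let $G$ be a group and $A$ an additive abelian group with a right $G$-action by group automorphisms. For any $a\in A$, $n\in\mathbb N$ and $g_1,\dots,g_n\in G$, $$[D^na](g_1,\dots,g_n)=a^{g_1\cdots g_n}+\sum_{s=1}^{n-1}(-1)^s\sum_{1\le i_1<\dots<i_s\le n}a^{\pi_{i_1,\dots,i_s}(g_1,\dots,g_n)}+(-1)^na.$$
   Context: Right action: $a\mapsto a^g$, $a^{\mathbf e}=a$, $(a^g)^h=a^{gh}$, additive in $a$. $\mathcal C^0(G,A)=A$; for $n\ge1$, $\mathcal C^n(G,A)$ consists of functions $G^n\to A$ vanishing whenever some argument is the identity $\mathbf e$. For $n\ge1$, $(d_nc)(g_1,\dots,g_n)=[c(g_1,\dots,g_{n-1})]^{g_n}-c(g_1,\dots,g_{n-1})$ for $c\in\mathcal C^{n-1}(G,A)$; $D^0=\mathrm{id}_A$, $D^n=d_nD^{n-1}$. For $1\le i_1<\dots<i_s\le n$, $\pi_{i_1,\dots,i_s}(g_1,\dots,g_n)$ is the ordered product $g_1\cdots g_n$ with the factors $g_{i_1},\dots,g_{i_s}$ omitted (the empty product being $\mathbf e$). *)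

(* Defs.v *)
From HB Require Import structures.
From mathcomp Require Import all_boot all_order all_algebra.
Set Implicit Arguments. Unset Strict Implicit. Unset Printing Implicit Defensive.
Import GRing.Theory.
Local Open Scope ring_scope.

Unset Implicit Arguments.
Section Cochains.
Variables (G : groupType) (A : zmodType) (act : A -> G -> A).

(* The normalization condition (vanishing when an argument is the identity)
   is preserved by d_n and plays no role in the values computed below. *)
Definition cochain (n : nat) := ('I_n -> G) -> A.

Definition normalized n (c : cochain n) : Prop :=
  forall g : 'I_n -> G, (exists i, g i = 1%g) -> c g = 0.

Definition dcoch (n : nat) (c : cochain n) : cochain n.+1 :=
  fun g => act (c (fun i => g (widen_ord (leqnSn n) i))) (g ord_max)
           - c (fun i => g (widen_ord (leqnSn n) i)).

Fixpoint Dn (n : nat) : A -> cochain n :=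
  match n with
  | 0 => fun a _ => a
  | m.+1 => fun a => dcoch m (Dn m a)
  end.

Definition pi_omit (n : nat) (S : {set 'I_n}) (g : 'I_n -> G) : G :=
  (\prod_(i < n | i \notin S) g i)%g.

End Cochains.

(* Main.v *)
Require Import Defs.
From HB Require Import structures.
From mathcomp Require Import all_boot all_order all_algebra.
Import GRing.Theory.
Local Open Scope ring_scope.

Lemma act_lemmas (G : groupType) (A : zmodType) (act : A -> G -> A)
  (actD : forall (a b : A) (g : G), act (a + b) g = act a g + act b g) g :
  [/\ act 0 g = 0, (forall x, act (- x) g = - act x g),
      (forall x (z : int), act (x *~ z) g = act x g *~ z) &
      (forall (I : Type) (r : seq I) (P : pred I) (F : I -> A),
         act (\sum_(i <- r | P i) F i) g = \sum_(i <- r | P i) act (F i) g)].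
Proof.
have a0 : act 0 g = 0.
  by apply: (addrI (act 0 g)); rewrite addr0 -actD addr0.
have aN : forall x, act (- x) g = - act x g.
  by move=> x; apply/eqP; rewrite -addr_eq0 -actD addNr a0.
have aMn : forall x n, act (x *+ n) g = act x g *+ n.
  by move=> x; elim=> [|n IH]; rewrite ?mulr0n // !mulrS actD IH.
split=> //.
  move=> x [n|n]; first by rewrite -!pmulrn aMn.
  by rewrite !NegzE !mulrNz aN -!pmulrn aMn.
move=> I r P F; elim: r => [|x r IH]; first by rewrite !big_nil.
by rewrite !big_cons; case: (P x); rewrite ?actD IH.
Qed.

Lemma widen_max_notin n (X : {set 'I_n}) :
  ord_max \notin [set widen_ord (leqnSn n) i | i in X].
Proof.
apply/imsetP => -[i _ /(congr1 val) /= E].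
by move: (ltn_ord i); rewrite -E ltnn.
Qed.

Lemma lift_max_widen n (i : 'I_n) : lift ord_max i = widen_ord (leqnSn n) i.
Proof. by apply: val_inj; rewrite /= /bump leqNgt ltn_ord. Qed.

Lemma pi_split (G : groupType) n (T : {set 'I_n.+1}) (g : 'I_n.+1 -> G) :
  pi_omit G n.+1 T g =
  ((\prod_(i < n | widen_ord (leqnSn n) i \notin T) g (widen_ord (leqnSn n) i))
   * (if ord_max \notin T then g ord_max else 1))%g.
Proof. by rewrite /pi_omit big_mkcond big_ord_recr /= -big_mkcond. Qed.

Lemma Dn_sum (G : groupType) (A : zmodType) (act : A -> G -> A)
  (act1 : forall a : A, act a 1%g = a)
  (actM : forall (a : A) (g h : G), act (act a g) h = act a (g * h)%g)
  (actD : forall (a b : A) (g : G), act (a + b) g = act a g + act b g)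
  (a : A) (n : nat) (g : 'I_n -> G) :
  Dn G A act n a g =
    \sum_(S : {set 'I_n}) act a (pi_omit G n S g) *~ ((-1) ^+ #|S|).
Proof.
elim: n g => [|n IH] g.
  rewrite (big_pred1 set0); last first.
    by move=> S; symmetry; apply/eqP/setP => -[].
  by rewrite /pi_omit big_ord0 cards0 act1 expr0 mulr1z.
rewrite /= /dcoch IH.
set w := widen_ord (leqnSn n).
have winj : injective w by move=> i j /(congr1 val) /= E; apply: val_inj.
have [_ _ aMz asum] := @act_lemmas G A act actD (g ord_max).
rewrite asum (bigID (fun T : {set 'I_n.+1} => ord_max \in T)) /= addrC.
congr (_ + _).
  rewrite (reindex (fun S : {set 'I_n} => [set w i | i in S])) /=; last first.
    exists (fun T : {set 'I_n.+1} => [set i | w i \in T]).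
      by move=> S _; apply/setP => i; rewrite inE mem_imset.
    move=> T; rewrite inE => HT; apply/setP => j.
    case: (unliftP ord_max j) => [i ->|->]; last first.
      by rewrite (negbTE HT) (negbTE (widen_max_notin _ _)).
    by rewrite lift_max_widen mem_imset // inE.
  apply: eq_big => [S|S _]; first by rewrite widen_max_notin.
  rewrite aMz actM card_imset // pi_split widen_max_notin.
  congr (act a (_ * _)%g *~ _).
  by apply: eq_bigl => i; rewrite mem_imset.
rewrite -sumrN.
rewrite (reindex (fun S : {set 'I_n} => ord_max |: [set w i | i in S])) /=; last first.
  exists (fun T : {set 'I_n.+1} => [set i | w i \in T]).
    move=> S _; apply/setP => i; rewrite !inE mem_imset //.
    have -> : (w i == ord_max) = false.
      by apply/negbTE; apply: contraNneq (widen_max_notin _ [set i]) => <-; rewrite imset_set1 inE.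
    by [].
  move=> T; rewrite inE => HT; apply/setP => j.
  case: (unliftP ord_max j) => [i ->|->]; last by rewrite HT setU11.
  rewrite lift_max_widen !inE mem_imset // inE.
  have -> : (w i == ord_max) = false.
    by apply/negbTE; apply: contraNneq (widen_max_notin _ [set i]) => <-; rewrite imset_set1 inE.
  by [].
apply: eq_big => [S|S _]; first by rewrite setU11.
rewrite cardsU1 widen_max_notin card_imset // pi_split setU11 /= mulg1.
rewrite add1n exprS mulN1r mulrNz; congr (- (act a _ *~ _)).
apply: eq_bigl => i; rewrite !inE mem_imset //.
have -> : (w i == ord_max) = false.
  by apply/negbTE; apply: contraNneq (widen_max_notin _ [set i]) => <-; rewrite imset_set1 inE.
by [].
Qed.

Theorem lemma1p3 (G : groupType) (A : zmodType) (act : A -> G -> A)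
  (act1 : forall a : A, act a 1%g = a)
  (actM : forall (a : A) (g h : G), act (act a g) h = act a (g * h)%g)
  (actD : forall (a b : A) (g : G), act (a + b) g = act a g + act b g)
  (a : A) (n : nat) (hn : (0 < n)%N) (g : 'I_n -> G) :
  Dn G A act n a g =
    act a (\prod_(i < n) g i)%g
    + \sum_(1 <= s < n)
        ((\sum_(S : {set 'I_n} | #|S| == s) act a (pi_omit G n S g)) *~ ((-1) ^+ s))
    + a *~ ((-1) ^+ n).
Proof.
rewrite Dn_sum // (partition_big (fun S : {set 'I_n} => inord #|S| : 'I_n.+1) xpredT) //=.
set H := fun s : nat =>
  (\sum_(S : {set 'I_n} | #|S| == s) act a (pi_omit G n S g)) *~ ((-1) ^+ s).
have cardle : forall S : {set 'I_n}, (#|S| <= n)%N.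
  by move=> S; rewrite -[X in (_ <= X)%N]card_ord max_card.
transitivity (\sum_(j < n.+1) H j).
  apply: eq_bigr => j _; rewrite /H mulrz_suml.
  apply: eq_big => [S|S /= Hj]; last first.
    by move/eqP: Hj => <-; rewrite inordK // ltnS.
  rewrite /=; apply/idP/idP => /eqP E.
    by rewrite -E inordK // ltnS.
  by apply/eqP/val_inj; rewrite /= inordK // ltnS.
rewrite -(big_mkord xpredT H) big_nat_recr //= (big_ltn hn).
congr (_ + _ + _).
- rewrite /H expr0 mulr1z (big_pred1 set0); last by move=> S; rewrite cards_eq0.
  by rewrite /pi_omit; congr (act a _); apply: eq_bigl => i; rewrite inE.
- rewrite /H (big_pred1 setT); last first.
    move=> S; apply/idP/eqP => [E|->]; last by rewrite cardsT card_ord.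
    by apply/eqP; rewrite eqEcard subsetT cardsT card_ord (eqP E) leqnn.
  rewrite /pi_omit (eq_bigl xpred0) ?big_pred0_eq ?act1 // => i.
  by rewrite inE.
Qed.
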